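(* Let $G$ be a finite group and $n\ge 1$ an integer. If there exists a $2$-starter under $G$ (i.e. in $K_{\overline{G}}$), then there exists a $2n$-starter under $G\times\mathbb{Z}_n$ (i.e. in $K_{\overline{G\times\mathbb{Z}_n}}$).
   Context: For a finite group $G$, $\overline{G}=G\cup\{\infty\}$, and $K_V$ denotes the complete graph on vertex set $V$. $G$ acts on $\overline{G}$ by right multiplication, with $\infty g=\infty$; for a subgraph $F$ of $K_{\overline{G}}$ and $g\in G$, $Fg$ is the graph obtained by replacing every vertex $v$ by $vg$, and the $G$-stabilizer of $F$ is $\{g\in G: Fg=F\}$. A $k$-factor of $K_V$ is a spanning $k$-regular subgraph. For a graph $\Gamma$ with vertex set $\overline{G}$, its list of differences is the multiset $\Delta\Gamma=\{ab^{-1},\ ba^{-1} : [a,b]\in E(\Gamma),\ a\neq\infty\neq b\}$. Given a finite group $G$ with $k$ dividing $|G|$, a $k$-factor $F$ of $K_{\overline{G}}$ is a $k$-starter under $G$ if (1) the $G$-stabilizer of $F$ has order $k$, and (2) $\Delta F$ contains every element of $G\setminus\{1_G\}$. In $G\times\mathbb{Z}_n$ the group operation is $(g,i)(h,j)=(gh,i+j)$. *)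

(* Defs.v *)
From HB Require Import structures.
From mathcomp Require Import all_boot all_fingroup.
Set Implicit Arguments. Unset Strict Implicit. Unset Printing Implicit Defensive.
Local Open Scope group_scope.

(* Vertices of K_{G-bar}: [option gT], with [None] playing the role of infinity. *)

Section Starters.
Variable gT : finGroupType.

Definition vact (v : option gT) (g : gT) : option gT := omap (fun x => x * g) v.

Definition graph_act (E : {set {set option gT}}) (g : gT) : {set {set option gT}} :=
  (fun e : {set option gT} => (fun v => vact v g) @: e) @: E.

Definition gstab (E : {set {set option gT}}) : {set gT} :=
  [set g : gT | graph_act E g == E].

Definition is_kfactor (k : nat) (E : {set {set option gT}}) : Prop :=
  (forall e, e \in E -> #|e| = 2) /\
  (forall v : option gT, #|[set e in E | v \in e]| = k).

Definition in_diffs (E : {set {set option gT}}) (g : gT) : Prop :=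
  exists a b : gT, [set Some a; Some b] \in E /\ (a * b^-1 = g \/ b * a^-1 = g).

Definition is_starter (k : nat) (E : {set {set option gT}}) : Prop :=
  [/\ (k %| #|gT|)%N, is_kfactor k E, #|gstab E| = k &
      forall g : gT, g != 1 -> in_diffs E g].
End Starters.

(* Main.v *)
Require Import Defs.
From HB Require Import structures.
From mathcomp Require Import all_boot all_fingroup zmodp zify.
Set Implicit Arguments. Unset Strict Implicit. Unset Printing Implicit Defensive.

Section Graph.
Variable V : finType.

Definition adj (E : {set {set V}}) (u v : V) : bool := [set u; v] \in E.
Definition two (E : {set {set V}}) := forall e, e \in E -> #|e| = 2.

Lemma adj_sym E u v : adj E u v = adj E v u.
Proof. by rewrite /adj setUC. Qed.

Lemma adj_irr E u : two E -> adj E u u = false.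
Proof. move=> H; apply/negP => /H; by rewrite setUid cards1. Qed.

Lemma edge_form E e : two E -> e \in E -> exists u v, e = [set u; v].
Proof. move=> H /H /eqP /cards2P [u [v [_ ->]]]; by exists u, v. Qed.

Lemma deg_adj E v : two E ->
  #|[set e in E | v \in e]| = #|[set w | adj E v w]|.
Proof.
move=> H.
have -> : [set e in E | v \in e] = (fun w => [set v; w]) @: [set w | adj E v w].
  apply/setP => e; rewrite inE; apply/andP/imsetP.
  - move=> [eE ve]; have [x [y exy]] := edge_form H eE; subst e.
    move: ve; rewrite !inE => /orP [/eqP ->|/eqP ->].
    + by exists y; rewrite // inE.
    + by exists x; rewrite ?inE /adj setUC.
  - by move=> [w]; rewrite inE => aw ->; rewrite !inE eqxx.
apply: card_in_imset => w w'; rewrite !inE => aw aw' eq.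
have wv : w != v by apply/eqP => wv; subst; rewrite adj_irr in aw.
have : w \in [set v; w'] by rewrite -eq !inE eqxx orbT.
by rewrite !inE (negbTE wv) => /eqP.
Qed.

Definition mkE (r : rel V) : {set {set V}} :=
  [set e | [exists u, exists v, (e == [set u; v]) && r u v]].

Variable r : rel V.
Hypothesis rsym : forall u v, r u v = r v u.
Hypothesis rirr : forall u, r u u = false.

Lemma mkE_two : two (mkE r).
Proof.
move=> e; rewrite inE => /existsP [u /existsP [v /andP [/eqP -> ruv]]].
rewrite cards2; case: eqP ruv => // ->; by rewrite rirr.
Qed.

Lemma adj_mkE u v : adj (mkE r) u v = r u v.
Proof.
apply/idP/idP; last first.
  by move=> ruv; rewrite /adj inE; apply/existsP; exists u; apply/existsP; exists v; rewrite eqxx.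
rewrite /adj inE => /existsP [u' /existsP [v' /andP [/eqP eq ruv]]].
have hu : u \in [set u'; v'] by rewrite -eq !inE eqxx.
have hv : v \in [set u'; v'] by rewrite -eq !inE eqxx orbT.
have hu' : u' \in [set u; v] by rewrite eq !inE eqxx.
have hv' : v' \in [set u; v] by rewrite eq !inE eqxx orbT.
move: hu hv hu' hv'; rewrite !inE.
move=> /orP [] /eqP eu /orP [] /eqP ev /orP [] /eqP e1 /orP [] /eqP e2; subst => //;
  idtac. all: try (by rewrite rsym). all: try (by rewrite rirr in ruv).
Qed.
End Graph.

Section Stab.
Variable gT : finGroupType.
Local Open Scope group_scope.

Lemma vact_inj (g : gT) : injective (fun v => vact v g).
Proof. move=> [x|] [y|] //= [] /mulIg -> //. Qed.

Lemma gstabP (E : {set {set option gT}}) g : two E ->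
  reflect (forall u v, adj E u v -> adj E (vact u g) (vact v g)) (g \in gstab E).
Proof.
move=> H; rewrite /gstab inE.
have img : forall u v, (fun v => vact v g) @: [set u; v] = [set vact u g; vact v g].
  by move=> u v; rewrite imsetU1 imset_set1.
apply: (iffP idP).
  move=> /eqP eq u v auv; rewrite /adj -img -eq /graph_act.
  by apply: imset_f.
move=> Hc; rewrite eqEcard; apply/andP; split.
  apply/subsetP => e' /imsetP [e eE ->].
  have [u [v euv]] := edge_form H eE; subst e.
  by rewrite img; apply: Hc.
rewrite /graph_act card_imset //; apply: imset_inj; exact: vact_inj.
Qed.
End Stab.

Lemma card_opt (T : finType) (P : pred (option T)) :
  #|[set w | P w]| = (P None + #|[set y | P (Some y)]|)%N.
Proof.
have -> : [set w | P w] = (if P None then [set None] else set0) :|: Some @: [set y | P (Some y)].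
  apply/setP => [[y|]]; rewrite !inE.
    case: (P None); rewrite ?inE /= (mem_imset _ _ (@Some_inj _)) inE //.
  case: (P None); rewrite ?inE //=; apply/esym/negbTE/imsetP => [[y]] //.
rewrite cardsU card_imset; last exact: Some_inj.
have -> : (if P None then [set None] else set0) :&: Some @: [set y | P (Some y)] = set0.
  apply/setP => w; rewrite !inE; case: (P None); rewrite ?inE //.
  case: eqP => // ->; apply/negbTE/imsetP => [[y]] //.
by case: (P None); rewrite ?cards1 ?cards0 subn0.
Qed.
Local Open Scope group_scope.
Section Main.
Variable gT : finGroupType.
Variable m : nat.
Variable E : {set {set option gT}}.
Hypothesis H2 : two E.
Notation T := (gT * 'I_m.+1)%type.

Definition pr (w : option T) : option gT := omap fst w.
Definition extra (u v : option T) : bool :=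
  match u, v with
  | Some x, Some y => [&& x.1 == y.1, x.2 != y.2 & adj E None (Some x.1)]
  | _, _ => false end.
Definition rr (u v : option T) : bool := adj E (pr u) (pr v) || extra u v.
Definition E' := mkE rr.

Lemma rr_sym u v : rr u v = rr v u.
Proof.
rewrite /rr adj_sym; congr orb; case: u v => [x|] [y|] //=.
by rewrite [y.1 == _]eq_sym [y.2 == _]eq_sym; case: eqP => // ->.
Qed.
Lemma rr_irr u : rr u u = false.
Proof. rewrite /rr adj_irr //; case: u => [x|] //=; by rewrite !eqxx. Qed.

Lemma two' : two E'.
Proof. exact: mkE_two rr_irr. Qed.
Lemma adj' u v : adj E' u v = rr u v.
Proof. exact: (@adj_mkE _ rr rr_sym u v). Qed.

Lemma card_fib (A : {set gT}) :
  #|[set y : T | y.1 \in A]| = (#|A| * m.+1)%N.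
Proof.
have -> : [set y : T | y.1 \in A] = setX A setT by apply/setP => y; rewrite !inE andbT.
by rewrite cardsX cardsT card_ord.
Qed.

Hypothesis Hdeg : forall v, #|[set e in E | v \in e]| = 2.

Lemma nbrs_card v : (adj E v None + #|[set a | adj E v (Some a)]|)%N = 2.
Proof. by rewrite -card_opt -deg_adj. Qed.

Lemma deg'_None : #|[set e in E' | None \in e]| = (2 * m.+1)%N.
Proof.
rewrite deg_adj; last exact: two'.
rewrite card_opt adj' rr_irr add0n.
have := nbrs_card None; rewrite adj_irr // add0n => <-.
rewrite -card_fib; apply: eq_card => y; rewrite !inE adj' /rr /= orbF //.
Qed.

Lemma deg'_Some x : #|[set e in E' | Some x \in e]| = (2 * m.+1)%N.
Proof.
rewrite deg_adj; last exact: two'.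
rewrite card_opt adj' /rr /= orbF.
have := nbrs_card (Some x.1).
set c := adj E (Some x.1) None.
have cs : adj E None (Some x.1) = c by rewrite adj_sym.
set B := [set a | adj E (Some x.1) (Some a)] => hB.
have -> : [set y | adj E' (Some x) (Some y)] =
   [set y : T | y.1 \in B] :|: (if c then setX [set x.1] [set~ x.2] else set0).
  apply/setP => y; rewrite !inE adj' /rr /= cs.
  case: c {hB cs} => /=; rewrite ?inE ?andbT ?orbF ?andbF ?orbF //; by rewrite [y.1 == _]eq_sym [y.2 == _]eq_sym.
rewrite cardsU card_fib.
have -> : #|[set y : T | y.1 \in B] :&: (if c then setX [set x.1] [set~ x.2] else set0)| = 0.
  apply/eqP; rewrite cards_eq0; apply/eqP.
  apply/setP => y; rewrite !inE; case: c {hB cs}; rewrite !inE ?andbF //.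
  apply/negbTE/andP => -[yB /andP [/eqP ey _]]; move: yB; by rewrite ey adj_irr.
rewrite subn0.
case: c hB cs => /= hB cs. 2: { rewrite add0n in hB. rewrite hB. set z := #|_|. have -> : z = 0 by rewrite /z; apply/eqP; rewrite cards_eq0. by rewrite addn0. }
rewrite cardsX cards1 cardsC1 card_ord /=.
have hB1 : #|B| = 1%N by move: hB; rewrite add1n => -[].
rewrite hB1; lia.
Qed.

Lemma pr_vact (w : option T) (g : T) : pr (vact w g) = vact (pr w) g.1.
Proof. by case: w. Qed.

Lemma stab' g : (g \in gstab E') = (g.1 \in gstab E).
Proof.
apply/(gstabP _ two')/(gstabP _ H2) => Hc u v.
  pose lift (w : option gT) : option T := omap (fun a => (a, 1)) w.
  have pl : forall w, pr (lift w) = w by case.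
  move=> auv; have := Hc (lift u) (lift v).
  rewrite !adj' /rr !pr_vact !pl auv => /(_ isT) /orP [] // .
  case: u v auv => [a|] [b|] //= auv; by rewrite eqxx andbF.
rewrite !adj' /rr !pr_vact => /orP [/Hc -> //|].
case: u v => [x|] [y|] //=; move=> /and3P [e1 e2 e3].
apply/orP; right; rewrite /= !(inj_eq (mulIg _)) e1 e2 /=.
exact: (Hc None (Some x.1)).
Qed.

Lemma stab'_card : #|gstab E'| = (#|gstab E| * m.+1)%N.
Proof. rewrite -card_fib; apply: eq_card => g; rewrite [in RHS]inE -stab' //. Qed.
End Main.

Theorem theorem4p1 (gT : finGroupType) (m : nat) :
  (exists E : {set {set option gT}}, is_starter 2 E) ->
  exists E : {set {set option (gT * 'I_m.+1)}}, is_starter (2 * m.+1) E.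
Proof.
move=> [E [dv [H2 Hdeg] st Hd]].
exists (E' m E); split.
- by rewrite card_prod card_ord; apply: dvdn_mul.
- split; first exact: two'.
  by case=> [x|]; [exact: deg'_Some | exact: deg'_None].
- by rewrite stab'_card // st.
- move=> [h k] hne.
  have mk : forall (a b : gT) (i j : 'I_m.+1), (a, i) * (b, j)^-1 = (a * b^-1, i * j^-1).
    by [].
  case: (eqVneq h 1) => [eh|nh].
  + subst h.
    have kne : k != 1.
      apply/eqP => ek; move/eqP: hne; apply; rewrite ek; reflexivity.
    have := nbrs_card H2 Hdeg None; rewrite adj_irr // add0n => hc.
    have [a] : exists a, a \in [set a | adj E None (Some a)].
      by apply/set0Pn; rewrite -card_gt0 hc.
    rewrite inE => ha.
    exists (a, k), (a, 1); split.
      change (adj (E' m E) (Some (a, k)) (Some (a, 1))).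
      by rewrite adj' /rr /= eqxx kne ha orbT.
    by left; rewrite mk mulgV invg1 mulg1.
  + have [a [b [Eab [ab|ba]]]] := Hd h nh.
    * exists (a, k), (b, 1); split.
        change (adj (E' m E) (Some (a, k)) (Some (b, 1))).
        by rewrite adj' /rr /=; apply/orP; left.
      by left; rewrite mk invg1 mulg1 ab.
    * exists (b, k), (a, 1); split.
        change (adj (E' m E) (Some (b, k)) (Some (a, 1))).
        by rewrite adj' /rr /= adj_sym; apply/orP; left.
      by left; rewrite mk invg1 mulg1 ba.
Qed.
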